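(* Let $n$ be even, let $r\le s\le 2r-1$, and let $m=s-r+1$. Then $$\nu(n,P^{(r)}_s)\ge 2h(n,r,m)+h(n,r-1,m).$$
   Context: $K^{(r)}_n$ denotes the ordered complete $r$-uniform hypergraph on vertex set $[n]=\{1,\dots,n\}$ (natural order), whose edges are all $r$-subsets of $[n]$. A copy of an ordered hypergraph $H$ in $K^{(r)}_n$ is the image of $H$ under an order-preserving injection $V(H)\to[n]$. The natural (tight) path $P^{(r)}_s$ has vertices $v_1<\dots<v_s$ and its edges are all sets of $r$ consecutive vertices $\{v_j,\dots,v_{j+r-1}\}$, $1\le j\le s-r+1$. For an ordered $r$-uniform $H$, $\nu(n,H)$ is the maximum number of copies of $H$ in $K^{(r)}_n$ that are pairwise edge-disjoint. An interval partition $(X,Y,Z)$ of $[n]$ consists of consecutive (possibly empty) intervals $X<Y<Z$ with union $[n]$. A set $S\subseteq[n]$ is $m$-left-biased if there is an interval partition $(X,Y,Z)$ of $[n]$ with $|X|=|Z|$, $|X\cap S|=m$ and $|Z\cap S|=0$. $h(n,t,m)$ denotes the number of $t$-subsets of $[n]$ that are $m$-left-biased. *)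

(* Defs.v *)
(* Vertex set [n] = {1..n} is modelled by 'I_n = {0..n-1}
   with its natural order. *)
From mathcomp Require Import all_boot.
Set Implicit Arguments. Unset Strict Implicit. Unset Printing Implicit Defensive.

(* An ordered hypergraph on vertex set 'I_k is given by its edge set. *)

Definition order_preserving (k n : nat) (f : {ffun 'I_k -> 'I_n}) : bool :=
  [forall i : 'I_k, forall j : 'I_k, (i < j) ==> (f i < f j)].

Definition copy_edges (k n : nat) (E : {set {set 'I_k}}) (f : {ffun 'I_k -> 'I_n})
  : {set {set 'I_n}} := [set (f @: (e : {set 'I_k})) | e in E].

Definition is_copy (k n : nat) (E : {set {set 'I_k}}) (C : {set {set 'I_n}}) : bool :=
  [exists f : {ffun 'I_k -> 'I_n}, order_preserving f && (C == copy_edges E f)].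

Definition edge_disjoint_copies (k n : nat) (E : {set {set 'I_k}})
  (F : {set {set {set 'I_n}}}) : bool :=
  [forall C in F, is_copy E C] &&
  [forall C in F, forall D in F, (C != D) ==> (C :&: D == set0)].

Definition nu (k n : nat) (E : {set {set 'I_k}}) : nat :=
  \max_(F : {set {set {set 'I_n}}} | edge_disjoint_copies E F) #|F|.

Definition tight_path (r s : nat) : {set {set 'I_s}} :=
  [set [set i : 'I_s | (j <= i) && (i < j + r)] | j : 'I_s & j + r <= s].

(* S is m-left-biased: there is an interval partition X < Y < Z of [n],
   X = [0,a), Y = [a,b), Z = [b,n), with |X| = |Z|, |X ∩ S| = m, Z ∩ S = ∅ *)
Definition left_biased (n m : nat) (S : {set 'I_n}) : bool :=
  [exists a : 'I_n.+1, exists b : 'I_n.+1,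
    [&& a <= b, (a : nat) == n - b,
        #|[set x in S | x < a]| == m &
        [forall x in S, x < b]]].

Definition h (n t m : nat) : nat :=
  #|[set S : {set 'I_n} | (#|S| == t) && left_biased m S]|.

(* Main.v *)
Require Import Defs.
From mathcomp Require Import all_boot zify.
Set Implicit Arguments. Unset Strict Implicit. Unset Printing Implicit Defensive.

Lemma cnt_int a b r : count (fun i => a <= i < b) (iota 0 r) = minn b r - a.
Proof.
elim: r => [|r IH]; first by rewrite /=; lia.
rewrite -addn1 iotaD count_cat IH /= add0n.
case: (boolP (a <= r < b)) => /= H; lia.
Qed.

Lemma cnt_range (P : pred nat) a b r :
  (forall i, a <= i < b -> P i) -> b <= r -> b - a <= count P (iota 0 r).
Proof.
move=> HP Hb.
apply: (@leq_trans (count (fun i => a <= i < b) (iota 0 r))).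
  rewrite cnt_int; lia.
apply: sub_count => i /= H; exact: HP.
Qed.

Lemma cnt_ub (P : pred nat) a b r :
  (forall i, i < r -> P i -> a <= i < b) -> count P (iota 0 r) <= b - a.
Proof.
move=> HP.
apply: (@leq_trans (count (fun i => a <= i < b) (iota 0 r))).
  rewrite (@eq_in_count _ P (fun i => P i && (i < r))); last first.
    by move=> i; rewrite mem_iota /= => ->; rewrite andbT.
  apply: sub_count => i /= /andP[H1 H2]; exact: HP.
rewrite cnt_int; lia.
Qed.

Lemma eq_cnt (P1 P2 : pred nat) r :
  (forall i : nat, i < r -> P1 i = P2 i) -> count P1 (iota 0 r) = count P2 (iota 0 r).
Proof. move=> H; apply: eq_in_count => i; rewrite mem_iota => /andP[_ Hi]; apply: H; by rewrite add0n in Hi. Qed.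

Definition fA (n r m : nat) (t : seq nat) (i : nat) : nat :=
  if i < r then nth 0 t i else nth 0 t (i - r) + n.+1 - nth 0 t m.-1.
Definition fC (n r m : nat) (t : seq nat) (i : nat) : nat :=
  if i < r.-1 then nth 0 t i
  else if i == r.-1 then n - nth 0 t m.-1
  else nth 0 t (i - r) + n.+1 - nth 0 t m.-1.
Definition fB (n r m : nat) (t : seq nat) (i : nat) : nat :=
  n - fA n r m t (r + m - 2 - i).

Lemma srt_lt t i j : sorted ltn t -> i < j -> j < size t -> nth 0 t i < nth 0 t j.
Proof.
move=> st ij js.
apply: (sorted_ltn_nth ltn_trans 0 st) => //; rewrite inE /=; lia.
Qed.

Lemma srt_le t i j : sorted ltn t -> i <= j -> j < size t -> nth 0 t i <= nth 0 t j.
Proof.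
move=> st ij js; case: (ltngtP i j) => H; try lia.
  by apply: ltnW; apply: srt_lt.
by rewrite H.
Qed.

Lemma loc_inc (f : nat -> nat) s :
  (forall i, i.+1 < s -> f i < f i.+1) -> forall i j, i < j -> j < s -> f i < f j.
Proof.
move=> H i j; elim: j => [|j IH] //= ij js.
case: (ltngtP i j) => c.
- apply: (@ltn_trans (f j)); [apply: IH => //; lia | apply: H].
  done.
- lia.
- by rewrite c; apply: H.
Qed.

Definition validA n r m t :=
  [/\ sorted ltn t, size t = r, 0 < m <= r & nth 0 t m.-1 + nth 0 t r.-1 < n].
Definition validC n r m t :=
  [/\ sorted ltn t, size t = r.-1, 0 < m <= r.-1 & nth 0 t m.-1 + nth 0 t r.-2 < n].

Lemma fA_step n r m t i : validA n r m t -> i.+1 < r + m - 1 ->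
  fA n r m t i < fA n r m t i.+1.
Proof.
case=> st sz hm hp hi; rewrite /fA.
have pm : nth 0 t m.-1 <= nth 0 t r.-1 by apply: srt_le => //; lia.
case: (ltnP i.+1 r) => h1.
  rewrite ifT; last lia. apply: srt_lt => //; lia.
case: (ltnP i r) => h2.
  have -> : i = r.-1 by lia.
  lia.
have: nth 0 t (i - r) < nth 0 t (i.+1 - r) by apply: srt_lt => //; lia.
lia.
Qed.

Lemma fA_inc n r m t : validA n r m t ->
  forall i j, i < j -> j < r + m - 1 -> fA n r m t i < fA n r m t j.
Proof. move=> v; apply: loc_inc => i; exact: fA_step. Qed.

Lemma fA_bnd n r m t i : validA n r m t -> i < r + m - 1 -> fA n r m t i <= n.
Proof.
case=> st sz hm hp hi; rewrite /fA.
case: (ltnP i r) => h.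
  have : nth 0 t i <= nth 0 t r.-1 by apply: srt_le => //; lia.
  lia.
have : nth 0 t (i - r) < nth 0 t m.-1 by apply: srt_lt => //; lia.
have : nth 0 t m.-1 <= nth 0 t r.-1 by apply: srt_le => //; lia.
lia.
Qed.

Lemma fC_step n r m t i : validC n r m t -> i.+1 < r + m - 1 ->
  fC n r m t i < fC n r m t i.+1.
Proof.
case=> st sz hm hp hi; rewrite /fC.
have pm : nth 0 t m.-1 <= nth 0 t r.-2 by apply: srt_le => //; lia.
case: (ltnP i.+1 r.-1) => h1.
  rewrite ifT; last lia. apply: srt_lt => //; lia.
case: (eqVneq i.+1 r.-1) => e1.
  rewrite ifT; last lia.
  have -> : i = r.-2 by lia.
  lia.
rewrite ifF; last by apply/negbTE; rewrite -leqNgt; lia.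
case: (eqVneq i r.-1) => e2.
  lia.
have: nth 0 t (i - r) < nth 0 t (i.+1 - r) by apply: srt_lt => //; lia.
lia.
Qed.

Lemma fC_inc n r m t : validC n r m t ->
  forall i j, i < j -> j < r + m - 1 -> fC n r m t i < fC n r m t j.
Proof. move=> v; apply: loc_inc => i; exact: fC_step. Qed.

Lemma fC_bnd n r m t i : validC n r m t -> i < r + m - 1 -> fC n r m t i <= n.
Proof.
case=> st sz hm hp hi; rewrite /fC.
have pm : nth 0 t m.-1 <= nth 0 t r.-2 by apply: srt_le => //; lia.
case: (ltnP i r.-1) => h.
  have : nth 0 t i <= nth 0 t r.-2 by apply: srt_le => //; lia.
  lia.
case: (eqVneq i r.-1) => e; first lia.
have : nth 0 t (i - r) < nth 0 t m.-1 by apply: srt_lt => //; lia.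
lia.
Qed.

Definition cntH n r (w : nat -> nat) q := count (fun i => n < w i + w q) (iota 0 r).
Definition isfp n r m (w : nat -> nat) q := q < r /\ q + cntH n r w q + 1 = m.

Lemma isfp_ext n r m (w1 w2 : nat -> nat) q :
  (forall i, i < r -> w1 i = w2 i) -> isfp n r m w1 q -> isfp n r m w2 q.
Proof.
move=> E [qr H]; split => //; rewrite -H /cntH.
congr (_ + _ + _); apply: eq_cnt => i Hi.
by rewrite !E //; lia.
Qed.

Lemma uniq_fp n r m w q1 q2 :
  (forall i j, i < j -> j < r -> w i < w j) ->
  isfp n r m w q1 -> isfp n r m w q2 -> q1 = q2.
Proof.
move=> inc.
have key : forall a b, a < b -> isfp n r m w a -> isfp n r m w b -> False.
  move=> a b ab [ar Ha] [br Hb].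
  have : cntH n r w a <= cntH n r w b.
    apply: sub_count => i /=; have := inc a b ab br; lia.
  lia.
move=> h1 h2; case: (ltngtP q1 q2) => // c.
  by case: (key _ _ c h1 h2).
by case: (key _ _ c h2 h1).
Qed.

Lemma W_fp n r m (v : nat -> nat) p j : j < m -> m <= r ->
  v (m.-1 - j) = p ->
  (forall i, i < r - j -> v i + p <= n) ->
  (forall i, r - j <= i < r -> n < v i + p) ->
  isfp n r m v (m.-1 - j).
Proof.
move=> jm mr vp lo hi; split; first lia.
have : cntH n r v (m.-1 - j) = j.
  rewrite /cntH vp; apply/eqP; rewrite eqn_leq; apply/andP; split.
    rewrite (_ : j = r - (r - j)); last lia.
    apply: cnt_ub => i ir /= H; apply/andP; split => //.
    case: (ltnP i (r - j)) => // c; have := lo i c; lia.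
  rewrite (_ : j = r - (r - j)); last lia.
  apply: cnt_range => // i /andP[a b] /=; apply: hi; lia.
lia.
Qed.

Lemma W_nofp n r m (v : nat -> nat) p j : j < m -> m <= r ->
  (forall i k, i < k -> k < r -> v i < v k) ->
  (forall i, i < r -> v i <= n) ->
  v (m.-1 - j) = p ->
  (forall i, i < r - j -> v i + p < n) ->
  (forall i, r - j <= i < r -> n < v i + p) ->
  forall q, ~ isfp n r m (fun i => n - v (r.-1 - i)) q.
Proof.
move=> jm mr inc bnd vp lo hi q [qr H].
have mono : forall i k, i <= k -> k < r -> v i <= v k.
  move=> i k ik kr; case: (ltngtP i k) => c; [exact: ltnW (inc _ _ c kr)|lia|by rewrite c].
set q' := r.-1 - q.
have Hq : q = r.-1 - q' by rewrite /q'; lia.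
have q'r : q' < r by rewrite /q'; lia.
have E : cntH n r (fun i => n - v (r.-1 - i)) q =
         count (fun i => v (r.-1 - i) + v q' < n) (iota 0 r).
  apply: eq_cnt => i Hi.
  have := bnd (r.-1 - i) ltac:(lia); have := bnd q' q'r.
  rewrite /= -/q'; move=> b1 b2; apply/idP/idP; lia.
rewrite E in H.
case: (leqP (r - j) q') => c1.
  have hq := hi q' ltac:(lia).
  have : count (fun i => v (r.-1 - i) + v q' < n) (iota 0 r) <= r - (r - m + j).+1.
    apply: cnt_ub => i ir /= Hi; apply/andP; split => //.
    case: (ltnP (r - m + j) i) => // c.
    have := mono (m.-1 - j) (r.-1 - i) ltac:(lia) ltac:(lia); lia.
  lia.
case: (leqP q' (m.-1 - j)) => c2.
  have hq : v q' <= p by rewrite -vp; apply: mono => //; lia.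
  have : r - j <= count (fun i => v (r.-1 - i) + v q' < n) (iota 0 r).
    apply: (@cnt_range _ j r r) => // i /andP[a b] /=.
    have := lo (r.-1 - i) ltac:(lia); lia.
  lia.
have hq := lo q' c1.
have : m - j <= count (fun i => v (r.-1 - i) + v q' < n) (iota 0 r).
  rewrite (_ : m - j = r - (r - m + j)); last lia.
  apply: (@cnt_range _ (r - m + j) r r) => // i /andP[a b] /=.
  have := mono (r.-1 - i) (m.-1 - j) ltac:(lia) ltac:(lia); lia.
lia.
Qed.

Lemma fA_lo n r m t i : i < r -> fA n r m t i = nth 0 t i.
Proof. by move=> h; rewrite /fA h. Qed.
Lemma fA_hi n r m t k : fA n r m t (r + k) = nth 0 t k + n.+1 - nth 0 t m.-1.
Proof. rewrite /fA ifF; last by apply/negbTE; rewrite -leqNgt leq_addr. by rewrite addKn. Qed.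
Lemma fC_lo n r m t i : i < r.-1 -> fC n r m t i = nth 0 t i.
Proof. by move=> h; rewrite /fC h. Qed.
Lemma fC_hi n r m t k : 0 < r -> fC n r m t (r + k) = nth 0 t k + n.+1 - nth 0 t m.-1.
Proof.
move=> r0; rewrite /fC ifF; last by apply/negbTE; rewrite -leqNgt; lia.
rewrite ifF; last by apply/negbTE/eqP; lia.
by rewrite addKn.
Qed.

Lemma winA n r m t j : validA n r m t -> j < m ->
  [/\ (forall i k, i < k -> k < r -> fA n r m t (j+i) < fA n r m t (j+k)),
      (forall i, i < r -> fA n r m t (j+i) <= n),
      fA n r m t (j + (m.-1 - j)) = nth 0 t m.-1,
      (forall i, i < r - j -> fA n r m t (j+i) + nth 0 t m.-1 < n) &
      (forall i, r - j <= i < r -> n < fA n r m t (j+i) + nth 0 t m.-1)].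
Proof.
move=> V jm; have V' := V; case: V' => st sz hm hp; split.
- move=> i k ik kr; apply: (fA_inc V); lia.
- move=> i ir; apply: (fA_bnd V); lia.
- by rewrite fA_lo; [congr nth; lia | lia].
- move=> i ir; rewrite fA_lo; last lia.
  have : nth 0 t (j + i) <= nth 0 t r.-1 by apply: srt_le => //; lia.
  lia.
- move=> i /andP[a b]; rewrite (_ : j + i = r + (j + i - r)); last lia.
  rewrite fA_hi.
  have : nth 0 t m.-1 <= nth 0 t r.-1 by apply: srt_le => //; lia.
  lia.
Qed.

Lemma winC n r m t j : validC n r m t -> j < m ->
  [/\ (forall i k, i < k -> k < r -> fC n r m t (j+i) < fC n r m t (j+k)),
      (forall i, i < r -> fC n r m t (j+i) <= n),
      fC n r m t (j + (m.-1 - j)) = nth 0 t m.-1,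
      (forall i, i < r - j -> fC n r m t (j+i) + nth 0 t m.-1 <= n) &
      ((forall i, r - j <= i < r -> n < fC n r m t (j+i) + nth 0 t m.-1) /\
      fC n r m t (j + (r.-1 - j)) = n - nth 0 t m.-1)].
Proof.
move=> V jm; have V' := V; case: V' => st sz hm hp.
have pm : nth 0 t m.-1 <= nth 0 t r.-2 by apply: srt_le => //; lia.
split.
- move=> i k ik kr; apply: (fC_inc V); lia.
- move=> i ir; apply: (fC_bnd V); lia.
- by rewrite fC_lo; [congr nth; lia | lia].
- move=> i ir; case: (ltnP (j + i) r.-1) => c.
    rewrite fC_lo //.
    have : nth 0 t (j + i) <= nth 0 t r.-2 by apply: srt_le => //; lia.
    lia.
  rewrite /fC ifF; last by apply/negbTE; rewrite -leqNgt.
  rewrite ifT; last by apply/eqP; lia.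
  lia.
split.
- move=> i /andP[a b]; rewrite (_ : j + i = r + (j + i - r)); last lia.
  rewrite fC_hi; last lia.
  lia.
- rewrite /fC ifF; last by apply/negbTE; rewrite -leqNgt; lia.
  by rewrite ifT; last by apply/eqP; lia.
Qed.

Lemma fpA n r m t j : validA n r m t -> j < m ->
  isfp n r m (fun i => fA n r m t (j + i)) (m.-1 - j).
Proof.
move=> V jm; have [st sz hm hp] := V; have [h1 h2 h3 h4 h5] := winA V jm.
apply: (W_fp (p := nth 0 t m.-1)) => //; try lia.
move=> i ir; exact: ltnW (h4 i ir).
Qed.

Lemma fpC n r m t j : validC n r m t -> j < m ->
  isfp n r m (fun i => fC n r m t (j + i)) (m.-1 - j).
Proof.
move=> V jm; have [st sz hm hp] := V; have [h1 h2 h3 h4 [h5 h6]] := winC V jm.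
by apply: (W_fp (p := nth 0 t m.-1)) => //; lia.
Qed.

Lemma nofpB n r m t j : validA n r m t -> j < m ->
  forall q, ~ isfp n r m (fun i => fB n r m t (j + i)) q.
Proof.
move=> V jm q H; have [st sz hm hp] := V.
have jm' : m.-1 - j < m by lia.
have [h1 h2 h3 h4 h5] := winA V jm'.
have := @W_nofp n r m (fun i => fA n r m t (m.-1 - j + i)) (nth 0 t m.-1) (m.-1 - j)
  jm' ltac:(lia) h1 h2 h3 h4 h5 q; apply.
apply: isfp_ext H => i ir /=; rewrite /fB; congr (_ - fA _ _ _ _ _); lia.
Qed.

Lemma sub_inj n a b : a <= n -> b <= n -> n - a = n - b -> a = b.
Proof. lia. Qed.

Lemma AA n r m t1 t2 j1 j2 : validA n r m t1 -> validA n r m t2 -> j1 < m -> j2 < m ->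
  (forall i, i < r -> fA n r m t1 (j1 + i) = fA n r m t2 (j2 + i)) -> t1 = t2.
Proof.
move=> V1 V2 jm1 jm2 E.
have [st1 sz1 hm hp1] := V1; have [st2 sz2 _ hp2] := V2.
have [a1 b1 c1 d1 e1] := winA V1 jm1.
have f1 := fpA V1 jm1.
have f2 : isfp n r m (fun i => fA n r m t1 (j1 + i)) (m.-1 - j2).
  apply: isfp_ext (fpA V2 jm2) => i ir; by rewrite E.
have ej := uniq_fp a1 f1 f2.
have {ej} ej : j1 = j2 by lia.
subst j2.
have [a2 b2 c2 d2 e2] := winA V2 jm1.
have ep : nth 0 t1 m.-1 = nth 0 t2 m.-1 by rewrite -c1 -c2 E //; lia.
apply: (@eq_from_nth _ 0); first by rewrite sz1 sz2.
move=> k; rewrite sz1 => kr.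
case: (leqP j1 k) => c.
  have := E (k - j1) ltac:(lia); rewrite subnKC // !fA_lo //.
have := E (r - j1 + k) ltac:(lia).
rewrite (_ : j1 + (r - j1 + k) = r + k); last lia.
rewrite !fA_hi ep.
have : nth 0 t1 m.-1 <= n by lia.
lia.
Qed.

Lemma CC n r m t1 t2 j1 j2 : validC n r m t1 -> validC n r m t2 -> j1 < m -> j2 < m ->
  (forall i, i < r -> fC n r m t1 (j1 + i) = fC n r m t2 (j2 + i)) -> t1 = t2.
Proof.
move=> V1 V2 jm1 jm2 E.
have [st1 sz1 hm hp1] := V1; have [st2 sz2 _ hp2] := V2.
have [a1 b1 c1 d1 [e1 g1]] := winC V1 jm1.
have f1 := fpC V1 jm1.
have f2 : isfp n r m (fun i => fC n r m t1 (j1 + i)) (m.-1 - j2).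
  apply: isfp_ext (fpC V2 jm2) => i ir; by rewrite E.
have ej := uniq_fp a1 f1 f2.
have {ej} ej : j1 = j2 by lia.
subst j2.
have [a2 b2 c2 d2 [e2 g2]] := winC V2 jm1.
have ep : nth 0 t1 m.-1 = nth 0 t2 m.-1 by rewrite -c1 -c2 E //; lia.
apply: (@eq_from_nth _ 0); first by rewrite sz1 sz2.
move=> k; rewrite sz1 => kr.
case: (leqP j1 k) => c.
  have := E (k - j1) ltac:(lia); rewrite subnKC // !fC_lo //.
have := E (r - j1 + k) ltac:(lia).
rewrite (_ : j1 + (r - j1 + k) = r + k); last lia.
rewrite !fC_hi ?ep; lia.
Qed.

Lemma AC n r m t1 t2 j1 j2 : validA n r m t1 -> validC n r m t2 -> j1 < m -> j2 < m ->
  (forall i, i < r -> fA n r m t1 (j1 + i) = fC n r m t2 (j2 + i)) -> False.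
Proof.
move=> V1 V2 jm1 jm2 E.
have [st1 sz1 hm hp1] := V1; have [st2 sz2 hm2 hp2] := V2.
have [a1 b1 c1 d1 e1] := winA V1 jm1.
have f1 := fpA V1 jm1.
have f2 : isfp n r m (fun i => fA n r m t1 (j1 + i)) (m.-1 - j2).
  apply: isfp_ext (fpC V2 jm2) => i ir; by rewrite E.
have ej := uniq_fp a1 f1 f2.
have {ej} ej : j1 = j2 by lia.
subst j2.
have [a2 b2 c2 d2 [e2 g2]] := winC V2 jm1.
have ep : nth 0 t1 m.-1 = nth 0 t2 m.-1 by rewrite -c1 -c2 E //; lia.
have := d1 (r.-1 - j1) ltac:(lia).
rewrite E; last lia.
rewrite g2 ep.
have : nth 0 t2 m.-1 <= nth 0 t2 r.-2 by apply: srt_le => //; lia.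
lia.
Qed.

Lemma BB n r m t1 t2 j1 j2 : validA n r m t1 -> validA n r m t2 -> j1 < m -> j2 < m ->
  (forall i, i < r -> fB n r m t1 (j1 + i) = fB n r m t2 (j2 + i)) -> t1 = t2.
Proof.
move=> V1 V2 jm1 jm2 E.
have [st1 sz1 hm hp1] := V1.
apply: (@AA n r m t1 t2 (m.-1 - j1) (m.-1 - j2)) => //; try lia.
move=> i ir.
have := E (r.-1 - i) ltac:(lia); rewrite /fB.
rewrite (_ : r + m - 2 - (j1 + (r.-1 - i)) = m.-1 - j1 + i); last lia.
rewrite (_ : r + m - 2 - (j2 + (r.-1 - i)) = m.-1 - j2 + i); last lia.
have k1 : m.-1 - j1 < m by lia.
have k2 : m.-1 - j2 < m by lia.
apply: sub_inj.
  have [_ b _ _ _] := winA V1 k1; apply: b => //; lia.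
have [_ b _ _ _] := winA V2 k2; apply: b => //; lia.
Qed.

Lemma AB n r m t1 t2 j1 j2 : validA n r m t1 -> validA n r m t2 -> j1 < m -> j2 < m ->
  (forall i, i < r -> fA n r m t1 (j1 + i) = fB n r m t2 (j2 + i)) -> False.
Proof.
move=> V1 V2 jm1 jm2 E.
apply: (nofpB V2 jm2 (q := m.-1 - j1)); apply: isfp_ext (fpA V1 jm1) => i ir; exact: E.
Qed.

Lemma CB n r m t1 t2 j1 j2 : validC n r m t1 -> validA n r m t2 -> j1 < m -> j2 < m ->
  (forall i, i < r -> fC n r m t1 (j1 + i) = fB n r m t2 (j2 + i)) -> False.
Proof.
move=> V1 V2 jm1 jm2 E.
apply: (nofpB V2 jm2 (q := m.-1 - j1)); apply: isfp_ext (fpC V1 jm1) => i ir; exact: E.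
Qed.

Definition fk n r m (k : nat) t :=
  if k == 0 then fA n r m t else if k == 1 then fB n r m t else fC n r m t.
Definition validk n r m (k : nat) t :=
  if k == 2 then validC n r m t else validA n r m t.

Lemma key_nat n r m k1 k2 t1 t2 j1 j2 : k1 < 3 -> k2 < 3 ->
  validk n r m k1 t1 -> validk n r m k2 t2 -> j1 < m -> j2 < m ->
  (forall i, i < r -> fk n r m k1 t1 (j1 + i) = fk n r m k2 t2 (j2 + i)) ->
  k1 = k2 /\ t1 = t2.
Proof.
rewrite /validk /fk.
case: k1 => [|[|[|k1]]] //; case: k2 => [|[|[|k2]]] //= _ _ V1 V2 jm1 jm2 E.
- by split => //; apply: (AA V1 V2 jm1 jm2 E).
- by case: (AB V1 V2 jm1 jm2 E).
- by case: (AC V1 V2 jm1 jm2 E).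
- by case: (AB V2 V1 jm2 jm1) => i ir; rewrite E.
- by split => //; apply: (BB V1 V2 jm1 jm2 E).
- by case: (CB V2 V1 jm2 jm1) => i ir; rewrite E.
- by case: (AC V2 V1 jm2 jm1) => i ir; rewrite E.
- by case: (CB V1 V2 jm1 jm2 E).
- by split => //; apply: (CC V1 V2 jm1 jm2 E).
Qed.

Lemma fB_inc n r m t : validA n r m t ->
  forall i j, i < j -> j < r + m - 1 -> fB n r m t i < fB n r m t j.
Proof.
move=> V i j ij js; rewrite /fB; have [st sz hm hp] := V.
have h1 := fA_bnd V (_ : r + m - 2 - i < r + m - 1).
have h2 := fA_inc V (_ : r + m - 2 - j < r + m - 2 - i) (_ : r + m - 2 - i < r + m - 1).
have := h1 ltac:(lia); have := h2 ltac:(lia) ltac:(lia).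
lia.
Qed.

Lemma fk_inc n r m k t : k < 3 -> validk n r m k t ->
  forall i j, i < j -> j < r + m - 1 -> fk n r m k t i < fk n r m k t j.
Proof.
rewrite /validk /fk; case: k => [|[|[|k]]] //= _ V.
- exact: fA_inc.
- exact: fB_inc.
- exact: fC_inc.
Qed.

Lemma fk_bnd n r m k t i : k < 3 -> validk n r m k t -> i < r + m - 1 -> fk n r m k t i <= n.
Proof.
rewrite /validk /fk; case: k => [|[|[|k]]] //= _ V.
- exact: fA_bnd.
- by rewrite /fB leq_subr.
- exact: fC_bnd.
Qed.

Definition ts N (S : {set 'I_N}) : seq nat := sort leq [seq val x | x <- enum S].

Lemma ts_sorted N (S : {set 'I_N}) : sorted ltn (ts S).
Proof.
rewrite ltn_sorted_uniq_leq sort_uniq sort_sorted ?andbT; last exact: leq_total.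
by rewrite (map_inj_uniq val_inj) enum_uniq.
Qed.

Lemma ts_size N (S : {set 'I_N}) : size (ts S) = #|S|.
Proof. by rewrite size_sort size_map cardE. Qed.

Lemma ts_mem N (S : {set 'I_N}) (x : 'I_N) : (val x \in ts S) = (x \in S).
Proof. by rewrite /ts mem_sort (mem_map val_inj) mem_enum. Qed.

Lemma ts_inj N (S1 S2 : {set 'I_N}) : ts S1 = ts S2 -> S1 = S2.
Proof. move=> E; apply/setP => x. rewrite -(ts_mem S1 x). rewrite -(ts_mem S2 x). by rewrite E. Qed.

Lemma ts_bnd N (S : {set 'I_N}) v : v \in ts S -> v < N.
Proof. rewrite /ts mem_sort. move=> /mapP [x _ ->]. exact: ltn_ord. Qed.

Lemma ts_count N (S : {set 'I_N}) a :
  count (fun v => v < a) (ts S) = #|[set x in S | x < a]|.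
Proof.
have P : perm_eq (sort leq [seq val x | x <- enum S]) [seq val x | x <- enum S].
  by rewrite perm_sort perm_refl.
rewrite /ts (permP P) count_map.
rewrite (_ : [set x in S | x < a] = S :&: [set x : 'I_N | x < a]); last first.
  by apply/setP => x; rewrite !inE.
rewrite cardE (perm_size (enum_setI _ _)) size_filter.
by apply: eq_count => x; rewrite !inE.
Qed.

Lemma cnt_nth (t : seq nat) a m : sorted ltn t -> 0 < m ->
  count (fun v => v < a) t = m -> nth 0 t m.-1 < a.
Proof.
move=> st m0 C; case: (ltnP (nth 0 t m.-1) a) => // c.
have : count (fun v => v < a) t <= m.-1.
  rewrite -(mkseq_nth 0 t) /mkseq count_map.
  rewrite (_ : m.-1 = m.-1 - 0); last lia.
  apply: cnt_ub => i ir /= H; rewrite ?leq0n /=.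
  case: (ltnP i m.-1) => // c2.
  have : nth 0 t m.-1 <= nth 0 t i by apply: srt_le.
  lia.
lia.
Qed.

Lemma lb_valid n m (S : {set 'I_n.+1}) :
  0 < m -> 0 < #|S| -> left_biased m S ->
  [/\ m <= #|S| & nth 0 (ts S) m.-1 + nth 0 (ts S) (#|S|).-1 < n].
Proof.
move=> m0 c0 /existsP [a /existsP [b /and4P [ab /eqP Ea /eqP Cm /forallP Hb]]].
have st := ts_sorted S.
have Cm' : count (fun v => v < a) (ts S) = m by rewrite ts_count.
have msz : m <= #|S| by rewrite -ts_size -Cm' count_size.
split => //.
have h1 := cnt_nth st m0 Cm'.
have : nth 0 (ts S) (#|S|).-1 \in ts S by apply: mem_nth; rewrite ts_size; lia.
move=> M; have := ts_bnd M.
move=> lt; have := Hb (Ordinal lt); rewrite -ts_mem /= M /=.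
have := ltn_ord a; have := ltn_ord b.
lia.
Qed.

Lemma lbA n r m (S : {set 'I_n.+1}) : 0 < m -> m <= r ->
  #|S| = r -> left_biased m S -> validA n r m (ts S).
Proof.
move=> m0 mr c L; have [] := lb_valid m0 (_ : 0 < #|S|) L; first lia.
rewrite c => _ H; split; [exact: ts_sorted | by rewrite ts_size | lia | exact: H].
Qed.

Lemma lbC n r m (S : {set 'I_n.+1}) : 0 < m ->
  #|S| = r.-1 -> left_biased m S -> validC n r m (ts S).
Proof.
move=> m0 c L.
case: (posnP #|S|) => c0.
  move: L => /existsP [a /existsP [b /and4P [_ _ /eqP Cm _]]].
  have : #|[set x in S | x < a]| <= #|S| by apply: subset_leq_card; apply/subsetP => x; rewrite inE => /andP[].
  lia.
have [] := lb_valid m0 c0 L.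
rewrite c => H1 H2; split; [exact: ts_sorted | by rewrite ts_size | lia | exact: H2].
Qed.

Definition gF n s (f : nat -> nat) : {ffun 'I_s -> 'I_n.+1} := [ffun i : 'I_s => inord (f i)].
Definition copyF n r s f := copy_edges (tight_path r s) (gF n s f).

Lemma copyF_is_copy n r s f :
  (forall i j, i < j -> j < s -> f i < f j) -> (forall i, i < s -> f i <= n) ->
  is_copy (tight_path r s) (copyF n r s f).
Proof.
move=> inc bnd; apply/existsP; exists (gF n s f); rewrite eqxx andbT.
apply/forallP => i; apply/forallP => j; apply/implyP => ij.
rewrite !ffunE !inordK; last (by apply: bnd); last (by apply: bnd).
exact: inc.
Qed.

Lemma mem_copyF n r s f e : (forall i, i < s -> f i <= n) ->
  e \in copyF n r s f ->
  exists j, j + r <= s /\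
    (forall x : 'I_n.+1, x \in e <-> exists i, i < r /\ nat_of_ord x = f (j + i)).
Proof.
move=> bnd /imsetP [e0 /imsetP [j0 Hj0 ->] ->].
rewrite inE in Hj0.
exists j0; split => // x; split.
  case/imsetP => i0; rewrite inE => /andP [a b] ->.
  exists (i0 - j0); split; first lia.
  rewrite ffunE inordK; last by apply: bnd.
  by congr f; lia.
case=> i [ir E].
have lt : j0 + i < s by lia.
apply/imsetP; exists (Ordinal lt); first by rewrite inE /=; lia.
apply: val_inj; rewrite /= ffunE inordK ?E //; exact: bnd.
Qed.

Lemma copyF_nonempty n r s f : 0 < r -> r <= s -> exists e, e \in copyF n r s f.
Proof.
move=> r0 rs; have s0 : 0 < s by lia.
set j0 := Ordinal s0.
exists (gF n s f @: [set i : 'I_s | (j0 <= i) && (i < j0 + r)]).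
apply/imsetP; exists [set i : 'I_s | (j0 <= i) && (i < j0 + r)] => //.
apply/imsetP; exists j0 => //; rewrite inE /=; lia.
Qed.

Lemma same_img (u v : nat -> nat) r :
  (forall i j, i < j -> j < r -> u i < u j) ->
  (forall i j, i < j -> j < r -> v i < v j) ->
  (forall i, i < r -> exists i', i' < r /\ u i = v i') ->
  (forall i, i < r -> exists i', i' < r /\ v i = u i') ->
  forall i, i < r -> u i = v i.
Proof.
move=> iu iv uv vu.
suff H : forall k i, i < k -> i < r -> u i = v i.
  by move=> i ir; apply: (H i.+1).
elim=> [|k IH] // i ik ir.
case: (ltnP i k) => c; first exact: IH.
have ei : i = k by lia.
have [i1 [i1r E1]] := uv i ir.
have [i2 [i2r E2]] := vu i ir.
have h1 : i <= i1.
  case: (ltnP i1 i) => // c1.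
  have := IH i1 ltac:(lia) i1r; have := iu i1 i c1 ir; lia.
have h2 : i <= i2.
  case: (ltnP i2 i) => // c2.
  have := IH i2 ltac:(lia) i2r; have := iv i2 i c2 ir; lia.
have h3 : v i <= v i1.
  case: (ltngtP i i1) => c3; [exact: ltnW (iv _ _ c3 i1r)|lia|by rewrite c3].
have h4 : u i <= u i2.
  case: (ltngtP i i2) => c3; [exact: ltnW (iu _ _ c3 i2r)|lia|by rewrite c3].
lia.
Qed.

Lemma copy_key n r s f1 f2 e :
  (forall i j, i < j -> j < s -> f1 i < f1 j) -> (forall i, i < s -> f1 i <= n) ->
  (forall i j, i < j -> j < s -> f2 i < f2 j) -> (forall i, i < s -> f2 i <= n) ->
  e \in copyF n r s f1 -> e \in copyF n r s f2 ->
  exists j1 j2, [/\ j1 + r <= s, j2 + r <= s &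
    forall i, i < r -> f1 (j1 + i) = f2 (j2 + i)].
Proof.
move=> i1 b1 i2 b2 E1 E2.
have [j1 [js1 H1]] := mem_copyF b1 E1.
have [j2 [js2 H2]] := mem_copyF b2 E2.
exists j1, j2; split => //.
apply: same_img.
- move=> i j ij jr; apply: i1; lia.
- move=> i j ij jr; apply: i2; lia.
- move=> i ir.
  have bd : f1 (j1 + i) < n.+1 by have := b1 (j1 + i) ltac:(lia); lia.
  have : Ordinal bd \in e by apply/H1; exists i.
  by case/H2 => i' [i'r /= E]; exists i'.
- move=> i ir.
  have bd : f2 (j2 + i) < n.+1 by have := b2 (j2 + i) ltac:(lia); lia.
  have : Ordinal bd \in e by apply/H2; exists i.
  by case/H1 => i' [i'r /= E]; exists i'.
Qed.

Lemma cardU_disj (T : finType) (A B : {set T}) :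
  (forall x, x \in A -> x \in B -> False) -> #|A :|: B| = #|A| + #|B|.
Proof.
move=> H; rewrite cardsU (_ : A :&: B = set0) ?cards0 ?subn0 //.
apply/setP => x; rewrite !inE; apply/negbTE/negP => /andP [a b]; exact: H a b.
Qed.

Definition SetA n r m : {set {set 'I_n.+1}} := [set S : {set 'I_n.+1} | (#|S| == r) && left_biased m S].
Definition SetC n r m : {set {set 'I_n.+1}} := [set S : {set 'I_n.+1} | (#|S| == r.-1) && left_biased m S].
Definition gvalid n r m (k : nat) (S : {set 'I_n.+1}) :=
  if k == 2 then S \in SetC n r m else S \in SetA n r m.
Definition cpy n r s (k : nat) (S : {set 'I_n.+1}) :=
  copyF n r s (fk n r (s - r + 1) k (ts S)).
Arguments gvalid n r m k S : clear implicits.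
Arguments cpy n r s k S : clear implicits.

Lemma gvalid_ok n r s k S : r <= s -> s < 2 * r -> k < 3 ->
  gvalid n r (s - r + 1) k S -> validk n r (s - r + 1) k (ts S).
Proof.
move=> rs s2 k3; rewrite /gvalid /validk /SetA /SetC; case: ifP => _; rewrite inE => /andP [/eqP c L].
  by apply: lbC => //; lia.
by apply: lbA => //; lia.
Qed.

Lemma cpy_props n r s k S : r <= s -> s < 2 * r -> k < 3 ->
  gvalid n r (s - r + 1) k S ->
  (forall i j, i < j -> j < s -> fk n r (s - r + 1) k (ts S) i < fk n r (s - r + 1) k (ts S) j) /\
  (forall i, i < s -> fk n r (s - r + 1) k (ts S) i <= n).
Proof.
move=> rs s2 k3 G; have V := gvalid_ok rs s2 k3 G; split.
  move=> i j ij js; apply: (fk_inc k3 V) => //; lia.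
move=> i hi; apply: (fk_bnd k3 V); lia.
Qed.

Lemma cpy_key n r s k1 k2 S1 S2 e : r <= s -> s < 2 * r -> k1 < 3 -> k2 < 3 ->
  gvalid n r (s - r + 1) k1 S1 -> gvalid n r (s - r + 1) k2 S2 ->
  e \in cpy n r s k1 S1 -> e \in cpy n r s k2 S2 -> k1 = k2 /\ S1 = S2.
Proof.
move=> rs s2 k13 k23 G1 G2 E1 E2.
have [a1 b1] := cpy_props rs s2 k13 G1.
have [a2 b2] := cpy_props rs s2 k23 G2.
have [j1 [j2 [h1 h2 E]]] := copy_key a1 b1 a2 b2 E1 E2.
have jm1 : j1 < s - r + 1 by lia.
have jm2 : j2 < s - r + 1 by lia.
have [-> T] := key_nat k13 k23 (gvalid_ok rs s2 k13 G1) (gvalid_ok rs s2 k23 G2) jm1 jm2 E.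
by split => //; apply: ts_inj.
Qed.

Lemma main_pos n r s : r <= s -> s < 2 * r ->
  2 * h n.+1 r (s - r + 1) + h n.+1 r.-1 (s - r + 1) <= nu n.+1 (tight_path r s).
Proof.
move=> rs s2.
set m := s - r + 1.
set FA := [set cpy n r s 0 S | S in SetA n r m].
set FB := [set cpy n r s 1 S | S in SetA n r m].
set FC := [set cpy n r s 2 S | S in SetC n r m].
set F := FA :|: FB :|: FC.
have ne : forall k S, exists e, e \in cpy n r s k S.
  by move=> k S; apply: copyF_nonempty; lia.
have memF : forall C, C \in F -> exists k S, [/\ k < 3, gvalid n r m k S & C = cpy n r s k S].
  move=> C; rewrite !inE => /orP [/orP [] | ] /imsetP [S HS ->].
  - by exists 0, S.
  - by exists 1, S.
  - by exists 2, S.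
have inj : forall k S1 S2, k < 3 -> gvalid n r m k S1 -> gvalid n r m k S2 ->
    cpy n r s k S1 = cpy n r s k S2 -> S1 = S2.
  move=> k S1 S2 k3 G1 G2 E; have [e He] := ne k S1.
  have He2 : e \in cpy n r s k S2 by rewrite -E.
  by have [_ ->] := cpy_key rs s2 k3 k3 G1 G2 He He2.
have disj : forall k1 k2 S1 S2, k1 < 3 -> k2 < 3 -> k1 != k2 ->
    gvalid n r m k1 S1 -> gvalid n r m k2 S2 -> cpy n r s k1 S1 = cpy n r s k2 S2 -> False.
  move=> k1 k2 S1 S2 k13 k23 kn G1 G2 E; have [e He] := ne k1 S1.
  have He2 : e \in cpy n r s k2 S2 by rewrite -E.
  have [ek _] := cpy_key rs s2 k13 k23 G1 G2 He He2.
  by rewrite ek eqxx in kn.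
have cA : #|FA| = h n.+1 r m.
  rewrite /h card_in_imset // => S1 S2 H1 H2; exact: (inj 0).
have cB : #|FB| = h n.+1 r m.
  rewrite /h card_in_imset // => S1 S2 H1 H2; exact: (inj 1).
have cC : #|FC| = h n.+1 r.-1 m.
  rewrite /h card_in_imset // => S1 S2 H1 H2; exact: (inj 2).
have cF : #|F| = #|FA| + #|FB| + #|FC|.
  rewrite /F cardU_disj; last first.
    move=> C; rewrite inE => /orP [] /imsetP [S1 H1 ->] /imsetP [S2 H2 E].
      exact: (disj 0 2 S1 S2).
    exact: (disj 1 2 S1 S2).
  rewrite cardU_disj // => C /imsetP [S1 H1 ->] /imsetP [S2 H2 E].
  exact: (disj 0 1 S1 S2).
have HF : edge_disjoint_copies (tight_path r s) F.
  apply/andP; split.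
    apply/forallP => C; apply/implyP => /memF [k [S [k3 G ->]]].
    have [a b] := cpy_props rs s2 k3 G.
    exact: copyF_is_copy.
  apply/forallP => C; apply/implyP => /memF [k1 [S1 [k13 G1 ->]]].
  apply/forallP => D; apply/implyP => /memF [k2 [S2 [k23 G2 ->]]].
  apply/implyP => neq; apply/eqP/setP => e; rewrite !inE.
  apply/negbTE/negP => /andP [E1 E2].
  have [ek eS] := cpy_key rs s2 k13 k23 G1 G2 E1 E2.
  by rewrite ek eS eqxx in neq.
rewrite /nu; apply: leq_trans (leq_bigmax_cond _ HF).
rewrite cF cA cB cC; lia.
Qed.

Lemma h0 t m : 0 < m -> h 0 t m = 0.
Proof.
move=> m0; rewrite /h; apply/eqP; rewrite cards_eq0; apply/eqP/setP => S; rewrite !inE.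
apply/negbTE/negP => /andP [_ /existsP [a /existsP [b /and4P [_ _ /eqP C _]]]].
have : #|[set x in S | x < a]| <= #|'I_0| by apply: max_card.
rewrite card_ord; lia.
Qed.

Theorem theorem2p2 (n r s : nat) :
  ~~ odd n -> r <= s -> s < 2 * r ->
  2 * h n r (s - r + 1) + h n r.-1 (s - r + 1) <= nu n (tight_path r s).
Proof.
move=> _ rs s2; case: n => [|n].
  by rewrite !h0 //; lia.
exact: main_pos.
Qed.
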